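(* Let $p=N=5$, and let $r_R=\operatorname{rank}Q_R$ for the maps $Q_R:\Lambda^R\to\Lambda^{R+5}$ defined below, whose values for $0\le R\le 9$ are \[ (r_0,\dots,r_9)=(1,\,25,\,300,\,2300,\,12650,\,53129,\,177075,\,480400,\,1045525,\,1723450). \] Consider the degree-20 rank polynomial $\mathcal R_{5,5}(x)=\sum_{R=0}^{20}r_Rx^R$, which is palindromic ($r_{20-R}=r_R$). These ten ranks, palindromicity, and the single condition $(1+x)\mid\mathcal R_{5,5}(x)$ determine the middle coefficient $r_{10}$ uniquely (namely $r_{10}=2{,}047{,}506$). For the resulting polynomial, $(1+x)^4\mid\mathcal R_{5,5}(x)$ while $(1+x)^5\nmid\mathcal R_{5,5}(x)$.
   Context: $\Lambda=\Lambda^\bullet(\mathbb{C}^{5\times5})$ is the exterior algebra on the $25$ odd generators $\Psi_{ij}$, $1\le i,j\le5$, and $Q_R$ is left wedge multiplication by $\mathrm{Tr}(\Psi^5)=\sum_{i_1,\dots,i_5}\Psi_{i_1i_2}\Psi_{i_2i_3}\Psi_{i_3i_4}\Psi_{i_4i_5}\Psi_{i_5i_1}$ restricted to $\Lambda^R$. Divisibility is in $\mathbb{Q}[x]$. *)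

(* Defs.v *)
From mathcomp Require Import all_boot all_order all_algebra.
Set Implicit Arguments. Unset Strict Implicit. Unset Printing Implicit Defensive.
Import GRing.Theory.
Local Open Scope ring_scope.

Definition r_low : seq nat :=
  [:: 1%N; 25%N; 300%N; 2300%N; 12650%N; 53129%N; 177075%N; 480400%N;
      1045525%N; 1723450%N].

Definition rcoef (c : nat) (i : nat) : nat :=
  if (i < 10)%N then nth 0%N r_low i
  else if i == 10%N then c
  else nth 0%N r_low (20 - i).

Definition rankPoly (c : nat) : {poly rat} :=
  \poly_(i < 21) (rcoef c i)%:R.

(* Main.v *)
Require Import Defs.
From mathcomp Require Import all_boot all_order all_algebra.
From mathcomp Require Import ring.
Import GRing.Theory Num.Theory.
Local Open Scope ring_scope.

Definition qseq : seq nat :=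
  [:: 1%N; 21%N; 210%N; 1330%N; 5985%N; 20348%N; 54243%N; 116070%N; 168410%N;
      116070%N; 54243%N; 20348%N; 5985%N; 1330%N; 210%N; 21%N; 1%N].

Definition qpoly : {poly rat} := \poly_(i < 17) (nth 0%N qseq i)%:R.

Lemma scale_natp (n : nat) (p : {poly rat}) : n%:R *: p = n%:R * p.
Proof. by rewrite -mul_polyC polyC_natr. Qed.

Lemma Xp1E : ('X + 1 : {poly rat}) = 'X - (-1)%:P.
Proof. by rewrite polyCN opprK. Qed.

Opaque Nat.of_num_uint.
Section RC.
Variable c : nat.
Lemma rc0 : rcoef c 0 = 1%N. Proof. reflexivity. Qed.
Lemma rc1 : rcoef c 1 = 25%N. Proof. reflexivity. Qed.
Lemma rc2 : rcoef c 2 = 300%N. Proof. reflexivity. Qed.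
Lemma rc3 : rcoef c 3 = 2300%N. Proof. reflexivity. Qed.
Lemma rc4 : rcoef c 4 = 12650%N. Proof. reflexivity. Qed.
Lemma rc5 : rcoef c 5 = 53129%N. Proof. reflexivity. Qed.
Lemma rc6 : rcoef c 6 = 177075%N. Proof. reflexivity. Qed.
Lemma rc7 : rcoef c 7 = 480400%N. Proof. reflexivity. Qed.
Lemma rc8 : rcoef c 8 = 1045525%N. Proof. reflexivity. Qed.
Lemma rc9 : rcoef c 9 = 1723450%N. Proof. reflexivity. Qed.
Lemma rc10 : rcoef c 10 = c. Proof. reflexivity. Qed.
Lemma rc11 : rcoef c 11 = 1723450%N. Proof. reflexivity. Qed.
Lemma rc12 : rcoef c 12 = 1045525%N. Proof. reflexivity. Qed.
Lemma rc13 : rcoef c 13 = 480400%N. Proof. reflexivity. Qed.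
Lemma rc14 : rcoef c 14 = 177075%N. Proof. reflexivity. Qed.
Lemma rc15 : rcoef c 15 = 53129%N. Proof. reflexivity. Qed.
Lemma rc16 : rcoef c 16 = 12650%N. Proof. reflexivity. Qed.
Lemma rc17 : rcoef c 17 = 2300%N. Proof. reflexivity. Qed.
Lemma rc18 : rcoef c 18 = 300%N. Proof. reflexivity. Qed.
Lemma rc19 : rcoef c 19 = 25%N. Proof. reflexivity. Qed.
Lemma rc20 : rcoef c 20 = 1%N. Proof. reflexivity. Qed.
End RC.
Transparent Nat.of_num_uint.

Definition rcE := (rc0, rc1, rc2, rc3, rc4, rc5, rc6, rc7, rc8, rc9, rc10,
  rc11, rc12, rc13, rc14, rc15, rc16, rc17, rc18, rc19, rc20).

Lemma sum21 (V : nmodType) (F : nat -> V) : \sum_(i < 21) F i =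
  F 0%N + F 1%N + F 2%N + F 3%N + F 4%N + F 5%N + F 6%N + F 7%N + F 8%N + F 9%N + F 10%N
  + F 11%N + F 12%N + F 13%N + F 14%N + F 15%N + F 16%N + F 17%N + F 18%N + F 19%N + F 20%N.
Proof.
rewrite -(big_mkord xpredT F) !big_nat_recr // big_geq // /= add0r. reflexivity.
Qed.
Opaque Nat.of_num_uint.
Lemma qc0 : nth 0%N qseq 0 = 1%N. Proof. reflexivity. Qed.
Lemma qc1 : nth 0%N qseq 1 = 21%N. Proof. reflexivity. Qed.
Lemma qc2 : nth 0%N qseq 2 = 210%N. Proof. reflexivity. Qed.
Lemma qc3 : nth 0%N qseq 3 = 1330%N. Proof. reflexivity. Qed.
Lemma qc4 : nth 0%N qseq 4 = 5985%N. Proof. reflexivity. Qed.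
Lemma qc5 : nth 0%N qseq 5 = 20348%N. Proof. reflexivity. Qed.
Lemma qc6 : nth 0%N qseq 6 = 54243%N. Proof. reflexivity. Qed.
Lemma qc7 : nth 0%N qseq 7 = 116070%N. Proof. reflexivity. Qed.
Lemma qc8 : nth 0%N qseq 8 = 168410%N. Proof. reflexivity. Qed.
Lemma qc9 : nth 0%N qseq 9 = 116070%N. Proof. reflexivity. Qed.
Lemma qc10 : nth 0%N qseq 10 = 54243%N. Proof. reflexivity. Qed.
Lemma qc11 : nth 0%N qseq 11 = 20348%N. Proof. reflexivity. Qed.
Lemma qc12 : nth 0%N qseq 12 = 5985%N. Proof. reflexivity. Qed.
Lemma qc13 : nth 0%N qseq 13 = 1330%N. Proof. reflexivity. Qed.
Lemma qc14 : nth 0%N qseq 14 = 210%N. Proof. reflexivity. Qed.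
Lemma qc15 : nth 0%N qseq 15 = 21%N. Proof. reflexivity. Qed.
Lemma qc16 : nth 0%N qseq 16 = 1%N. Proof. reflexivity. Qed.
Transparent Nat.of_num_uint.
Definition qcE := (qc0, qc1, qc2, qc3, qc4, qc5, qc6, qc7, qc8, qc9, qc10, qc11, qc12, qc13, qc14, qc15, qc16).

Lemma sum17 (V : nmodType) (F : nat -> V) : \sum_(i < 17) F i =
  F 0%N + F 1%N + F 2%N + F 3%N + F 4%N + F 5%N + F 6%N + F 7%N + F 8%N + F 9%N + F 10%N
  + F 11%N + F 12%N + F 13%N + F 14%N + F 15%N + F 16%N.
Proof.
rewrite -(big_mkord xpredT F) !big_nat_recr // big_geq // /= add0r. reflexivity.
Qed.

Lemma q_expand : qpoly = \sum_(i < 17) (nth 0%N qseq i)%:R * 'X^i.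
Proof.
rewrite /qpoly poly_def; apply: eq_bigr => i _; exact: scale_natp.
Qed.

Lemma eval_rank c : (rankPoly c).[-1] = c%:R - 2047506%:R.
Proof.
rewrite /rankPoly horner_poly.
rewrite (@sum21 _ (fun i => (rcoef c i)%:R * (-1) ^+ i)) !rcE.
ring.
Qed.


Lemma rank_expand c : rankPoly c =
  \sum_(i < 21) (rcoef c i)%:R * 'X^i.
Proof.
rewrite /rankPoly poly_def; apply: eq_bigr => i _; exact: scale_natp.
Qed.

Lemma rank_fact : rankPoly 2047506 = qpoly * ('X + 1) ^+ 4.
Proof.
rewrite rank_expand.
rewrite (@sum21 _ (fun i => (rcoef 2047506 i)%:R * 'X^i)) !rcE q_expand.
rewrite (@sum17 _ (fun i => (nth 0%N qseq i)%:R * 'X^i)) !qcE.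
ring.
Qed.

Lemma eval_q : qpoly.[-1] = 13750%:R.
Proof.
rewrite /qpoly horner_poly.
rewrite (@sum17 _ (fun i => (nth 0%N qseq i)%:R * (-1) ^+ i)) !qcE.
ring.
Qed.

Theorem mainTheorem6 :
  (forall c : nat, (('X + 1 : {poly rat}) %| rankPoly c) = (c == 2047506%N))
  /\ (('X + 1 : {poly rat}) ^+ 4 %| rankPoly 2047506)
  /\ ~~ (('X + 1 : {poly rat}) ^+ 5 %| rankPoly 2047506).
Proof.
split; [|split].
- move=> c; rewrite Xp1E dvdp_XsubCl /root eval_rank subr_eq0.
  by rewrite eqr_nat.
- by rewrite rank_fact dvdp_mull.
- rewrite rank_fact exprS dvdp_mul2r; last first.
    by rewrite expf_neq0 // Xp1E polyXsubC_eq0.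
  by rewrite Xp1E dvdp_XsubCl /root eval_q pnatr_eq0.
Qed.
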